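(* Let $n>0$ be the degree of freedom and $\eta_0$ a real constant. Let $k,\mu$ be nonzero constants with the same sign. Consider the isenthalpic van der Waals pressure $$p(\rho)=\frac{3\rho\,(n\rho^2+(6-3n)\rho+2\eta_0)}{6+3n-n\rho},\qquad 0<\rho<3,$$ and put $$Q'(\rho)=\frac{k}{\mu}\rho\,p'(\rho)=\frac{6k\rho}{\mu(6+3n-\rho n)^2}\Big(3\eta_0(n+2)+\rho(6-3n)(6+3n)+6n(n+1)\rho^2-n^2\rho^3\Big).$$ Let $C_1\neq0$ and $C_2$ be real constants, let $J\subset(0,3)$ be an open interval on which $C_1\rho+C_2\neq0$, and let $G$ be an antiderivative of $\frac{Q'(\rho)}{C_1(C_1\rho+C_2)}$ on $J$. If $$\eta_0>\frac{2(n-2)^2(2n+5)}{3n(n+2)},$$ then $G$ is invertible on $J$.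
   Context: The van der Waals gas (in reduced units) has state equations $p=\frac{8T}{3v-1}-\frac{3}{v^2}$ and $e=\frac{4n}{3}T-\frac{3}{v}$, where $v=\rho^{-1}>1/3$ is the specific volume (so $0<\rho<3$), $T$ is the temperature, $e$ is the specific energy and $n$ is the degree of freedom. An isenthalpic process is one with specific enthalpy $\eta=e+p\rho^{-1}$ equal to the constant $\eta_0$; along it, $p$ as a function of $\rho$ is given by the displayed formula. The permeability $k$ and viscosity $\mu$ are constants. *)

(* Defs.v *)
From Stdlib Require Import Reals Lra.
From Coquelicot Require Import Coquelicot.
Open Scope R_scope.

Definition p_isen (n eta0 rho : R) : R :=
  3 * rho * (n * rho ^ 2 + (6 - 3 * n) * rho + 2 * eta0) / (6 + 3 * n - n * rho).

Definition Qprime (n eta0 k mu rho : R) : R :=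
  k / mu * rho * Derive (p_isen n eta0) rho.

(* Main.v *)
Require Import Defs.
From Stdlib Require Import Reals Lra Psatz.
From Coquelicot Require Import Coquelicot.
Open Scope R_scope.
Lemma dp n eta0 rho (Hn : 0 < n) (H0: 0 < rho < 3) :
  Derive (p_isen n eta0) rho = 6 / (6 + 3*n - n*rho)^2 *
   (3*eta0*(n+2) + rho*(6-3*n)*(6+3*n) + 6*n*(n+1)*rho^2 - n^2*rho^3).
Proof.
  assert (HD : 6 + 3*n - n*rho > 0) by nra.
  apply is_derive_unique. unfold p_isen.
  auto_derive. lra. field. lra.
Qed.
Lemma fpos n eta0 rho (Hn : 0 < n) (H0: 0 < rho < 3)
  (Heta : eta0 > 2 * (n - 2) ^ 2 * (2 * n + 5) / (3 * n * (n + 2))) :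
  0 < 3*eta0*(n+2) + rho*(6-3*n)*(6+3*n) + 6*n*(n+1)*rho^2 - n^2*rho^3.
Proof.
  assert (E: 3*n*(n+2)*eta0 > 2 * (n - 2) ^ 2 * (2 * n + 5)).
  { apply Rgt_lt in Heta. apply Rlt_gt.
    apply Rmult_lt_reg_r with (/ (3*n*(n+2))). apply Rinv_0_lt_compat; nra.
    replace (3*n*(n+2)*eta0 * / (3*n*(n+2))) with eta0 by (field; lra). exact Heta. }
  assert (K: n * (3*eta0*(n+2) + rho*(6-3*n)*(6+3*n) + 6*n*(n+1)*rho^2 - n^2*rho^3)
     = (3*n*(n+2)*eta0 - 2 * (n - 2) ^ 2 * (2 * n + 5)) + (n*rho - n + 2)^2 * (4*n+10-n*rho)) by ring.
  assert (0 <= (n*rho - n + 2)^2 * (4*n+10-n*rho)).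
  { apply Rmult_le_pos. apply pow2_ge_0. nra. }
  nra.
Qed.

Theorem mainTheorem3
  (n eta0 k mu C1 C2 a b : R) (G : R -> R)
  (Hn : 0 < n)
  (Hk : k <> 0) (Hmu : mu <> 0) (Hsign : 0 < k * mu)
  (HC1 : C1 <> 0)
  (Hab : a < b) (Ha : 0 <= a) (Hb : b <= 3)
  (HJ : forall rho, a < rho < b -> C1 * rho + C2 <> 0)
  (HG : forall rho, a < rho < b ->
          is_derive G rho (Qprime n eta0 k mu rho / (C1 * (C1 * rho + C2))))
  (Heta : eta0 > 2 * (n - 2) ^ 2 * (2 * n + 5) / (3 * n * (n + 2))) :
  forall x y, a < x < b -> a < y < b -> G x = G y -> x = y.
Proof.
  intros x y Hx Hy Hxy.
  destruct (Req_dec x y) as [|Hne]; [assumption|exfalso].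
  assert (Hin : forall c, Rmin x y <= c <= Rmax x y -> a < c < b).
  { intros c Hc. unfold Rmin, Rmax in Hc.
    destruct (Rle_dec x y); lra. }
  destruct (MVT_gen G x y (fun rho => Qprime n eta0 k mu rho / (C1 * (C1 * rho + C2))))
    as [c [Hc Heq]].
  - intros z Hz. apply HG. apply Hin. lra.
  - intros z Hz. apply continuity_pt_filterlim.
    apply (ex_derive_continuous (V:=R_NormedModule) G z).
    eexists. apply HG. apply Hin. exact Hz.
  - pose proof (Hin c Hc) as Hc'.
    rewrite Hxy, Rminus_diag in Heq.
    symmetry in Heq. apply Rmult_integral in Heq.
    destruct Heq as [Heq|Heq]; [|lra].
    unfold Rdiv in Heq. apply Rmult_integral in Heq.
    destruct Heq as [Heq|Heq].
    + unfold Qprime in Heq. rewrite dp in Heq by lra.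
      assert (HD : 6 + 3*n - n*c > 0) by nra.
      pose proof (fpos n eta0 c Hn ltac:(lra) Heta).
      assert (Hkm : 0 < k / mu).
      { replace (k/mu) with (k*mu / (mu*mu)) by (field; lra).
        apply Rdiv_lt_0_compat; nra. }
      assert (0 < 6 / (6 + 3 * n - n * c) ^ 2).
      { apply Rdiv_lt_0_compat; [lra|]. apply pow_lt. lra. }
      assert (0 < k / mu * c * (6 / (6 + 3 * n - n * c) ^ 2 *
       (3 * eta0 * (n + 2) + c * (6 - 3 * n) * (6 + 3 * n) + 6 * n * (n + 1) * c ^ 2 -
        n ^ 2 * c ^ 3))).
      { apply Rmult_lt_0_compat. apply Rmult_lt_0_compat; lra.
        apply Rmult_lt_0_compat; lra. }
      lra.
    + apply Rinv_neq_0_compat in Heq; auto.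
Qed.
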